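(* Let $S$ be an $a$-cap free configuration. Then a slope labeling of $S$ exists. In particular, for every edge $e$ of $S$ let $c(e)$ be the maximum size of a cap starting with the edge $e$; then the function $e \mapsto c(e)-1$ is a slope labeling of $S$.
   Context: A configuration is a finite set $S$ of points with a linear order $<$ and, for every $3$-element subset, an arbitrary assignment declaring it either a cap or a cup. Points $x_1<\cdots<x_a$ form an $a$-cup (resp. $a$-cap) if every consecutive triple $\{x_{i-1},x_i,x_{i+1}\}$, $1<i<a$, is assigned cup (resp. cap); $1$- and $2$-element sets are both caps and cups. $S$ is $a$-cap free if it contains no $a$-cap. An edge is a pair $x<y$ of points, written $xy$; a cap $x_1x_2\cdots x_a$ with $a \ge 2$ starts with the edge $x_1x_2$. A slope labeling of an $a$-cap free configuration $S$ is an assignment of an integer $s(xy) \in \{1, 2, \dots, a-2\}$ to every edge $xy$ of $S$ such that for any points $x<y<z$ in $S$, $s(xy) \leq s(yz)$ implies that $\{x,y,z\}$ is a $3$-cup. *)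

(* Defs.v *)
From mathcomp Require Import all_boot all_order.
Set Implicit Arguments. Unset Strict Implicit. Unset Printing Implicit Defensive.

(* A configuration with n points: the points are 'I_n with the natural linear
   order, and [cupb x y z] (meaningful for x < y < z) is true iff the triple
   {x,y,z} is declared a cup (false = it is declared a cap). *)
Section Config.
Variables (n : nat) (cupb : 'I_n -> 'I_n -> 'I_n -> bool).

Fixpoint consec_caps (s : seq 'I_n) : bool :=
  match s with
  | x :: ((y :: z :: _) as t) => ~~ cupb x y z && consec_caps t
  | _ => true
  end.

Definition is_cap (s : seq 'I_n) : bool :=
  sorted (fun u v : 'I_n => u < v) s && consec_caps s.

Definition cap_free (a : nat) : Prop :=
  ~ (exists s : seq 'I_n, is_cap s /\ size s = a).

(* maximum size of a cap starting with the edge xy (caps have size <= n) *)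
Definition max_cap_from (x y : 'I_n) : nat :=
  \max_(k < n.+1 | [exists t : k.-tuple 'I_n,
                      is_cap t && (take 2 t == [:: x; y])]) k.

Definition slope_labeling (a : nat) (s : 'I_n -> 'I_n -> nat) : Prop :=
  (forall x y : 'I_n, x < y -> 1 <= s x y <= a - 2) /\
  (forall x y z : 'I_n, x < y -> y < z -> s x y <= s y z -> cupb x y z).

End Config.

(* Main.v *)
Require Import Defs.
From mathcomp Require Import all_boot all_order.
From mathcomp Require Import zify.
Set Implicit Arguments.

Section Aux.
Variables (n : nat) (cupb : 'I_n -> 'I_n -> 'I_n -> bool).

Lemma consec_take k s : consec_caps cupb s -> consec_caps cupb (take k s).
Proof.
elim: s k => [|x t IH] [|k] //=.
case: t IH => [|y u] IH //=.
case: k => [|k] //=.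
case: u IH => [|z w] IH //=.
case: k => [|k] //= /andP[h1 h2].
rewrite h1 /=. exact: (IH k.+2 h2).
Qed.

Lemma cap_take k s : is_cap cupb s -> is_cap cupb (take k s).
Proof.
by case/andP=> h1 h2; rewrite /is_cap take_sorted // consec_take.
Qed.

Lemma cap_size s : is_cap cupb s -> size s <= n.
Proof.
case/andP=> h1 _.
have hu : uniq s.
  apply: (sorted_uniq (leT := fun u v : 'I_n => u < v)) => //.
  - by move=> y x z; apply: ltn_trans.
  - by move=> x; rewrite /= ltnn.
by rewrite -(card_uniqP hu); apply: leq_trans (max_card _) _; rewrite card_ord.
Qed.

Lemma capP x y k : reflect (exists s, [/\ size s = k, is_cap cupb s & take 2 s = [:: x; y]])
  [exists t : k.-tuple 'I_n, is_cap cupb t && (take 2 t == [:: x; y])].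
Proof.
apply: (iffP existsP) => [[t /andP[h1 /eqP h2]] | [s [hs h1 h2]]].
  by exists (tval t); split; rewrite ?size_tuple.
have hs' : size s == k by apply/eqP.
by exists (Tuple hs'); rewrite /= h1 h2 eqxx.
Qed.

End Aux.

Theorem theorem3p2 (n a : nat) (cupb : 'I_n -> 'I_n -> 'I_n -> bool)
  (Hfree : cap_free cupb a) :
  (exists s : 'I_n -> 'I_n -> nat, slope_labeling cupb a s) /\
  slope_labeling cupb a (fun x y => max_cap_from cupb x y - 1).
Proof.
suff H : slope_labeling cupb a (fun x y => max_cap_from cupb x y - 1).
  by split=> //; eexists; exact: H.
have Ha : 0 < a.
  case: a Hfree => // Hf; exfalso; apply: Hf; by exists [::].
have lb : forall x y : 'I_n, x < y -> 2 <= max_cap_from cupb x y.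
  move=> x y xy.
  have h2 : 2 < n.+1 by have := ltn_ord y; lia.
  rewrite /max_cap_from.
  apply: (leq_trans _ (leq_bigmax_cond (F := fun k : 'I_n.+1 => nat_of_ord k) (Ordinal h2) _)) => //.
  apply/capP; exists [:: x; y]; split => //.
  by rewrite /is_cap /= xy.
split.
  move=> x y xy; have := lb x y xy.
  suff : max_cap_from cupb x y <= a - 1 by lia.
  apply/bigmax_leqP => k /capP [s [hs hc _]].
  rewrite leqNgt; apply/negP => hk.
  apply: Hfree; exists (take a s); split; first exact: cap_take.
  rewrite size_takel //; lia.
move=> x y z xy yz.
apply: contraTT => hc.
have l1 := lb y z yz.
suff : max_cap_from cupb y z <= (max_cap_from cupb x y).-1 by lia.
apply/bigmax_leqP => k /capP [s [hs /andP [hs1 hs2] ht]].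
have hsplit : exists u, s = [:: y, z & u].
  case: s hs hs1 hs2 ht => [|y' [|z' u]] //= _ _ _ [-> ->]; by exists u.
case: hsplit => u es; subst s.
have hcap : is_cap cupb [:: x, y, z & u].
  by rewrite /is_cap /= hc; rewrite /= in hs1 hs2; rewrite xy hs1 hs2.
have hk : k.+1 < n.+1 by have := @cap_size n cupb _ hcap; rewrite /= -hs /=; lia.
have := leq_bigmax_cond (F := fun k : 'I_n.+1 => nat_of_ord k) (P := fun k : 'I_n.+1 => [exists t : k.-tuple 'I_n, is_cap cupb t && (take 2 t == [:: x; y])]) (Ordinal hk).
rewrite /max_cap_from /= => h.
have : k.+1 <= \max_(k0 < n.+1 | [exists t : k0.-tuple 'I_n, is_cap cupb t && (take 2 t == [:: x; y])]) k0.
  apply: h; apply/capP; exists [:: x, y, z & u]; split => //=; by rewrite -hs.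
move=> H1; by rewrite -ltnS (ltn_predK H1).
Qed.
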